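(* Let $(\sigma_N)_{N \geq 1}$ be a sequence such that $\sigma_N$ is a permutation of $\{1,\dots,N\}$ for every $N \geq 1$, and such that for every $N \geq 1$, $\sigma_N$ is obtained by removing the element $N+1$ from the cycle structure of $\sigma_{N+1}$. For every finite subset $I \subset \mathbb{N}^* = \{1,2,\dots\}$ and every integer $N \geq \max I$, let $\sigma^{(N)}_I$ be the permutation of $I$ obtained by removing the elements of $\{1,\dots,N\} \setminus I$ from the cycle structure of $\sigma_N$. Then $\sigma^{(N)}_I$ does not depend on the choice of $N \geq \max I$; writing $\sigma_I := \sigma^{(N)}_I$, for all finite subsets $I \subset J$ of $\mathbb{N}^*$, the permutation $\sigma_I$ is obtained from the cycle structure of $\sigma_J$ by removing the elements of $J \setminus I$.
   Context: For finite sets $I \subset J$ and a permutation $\tau$ of $J$, ''removing the elements of $J \setminus I$ from the cycle structure of $\tau$'' means forming the permutation $\pi$ of $I$ given by $\pi(x) = \tau^m(x)$, where $m \geq 1$ is the smallest integer such that $\tau^m(x) \in I$. *)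

(* Defs.v *)
From mathcomp Require Import all_boot.
From mathcomp Require Import finmap.
Set Implicit Arguments. Unset Strict Implicit. Unset Printing Implicit Defensive.
Local Open Scope fset_scope.

Definition intv (N : nat) : {fset nat} := [fset i | i in iota 1 N].

(* A permutation of the finite set J is represented by a function nat -> nat
   that maps J bijectively onto J and is the identity outside J. *)
Definition is_perm_on (J : {fset nat}) (f : nat -> nat) : Prop :=
  [/\ {in J, forall x, f x \in J}, {in J &, injective f}
    & forall x, x \notin J -> f x = x].

(* pi is obtained from the cycle structure of tau (a permutation of J)
   by removing the elements of J \ I:  for x in I, pi x = tau^m x where
   m >= 1 is the smallest integer with tau^m x in I; pi is the identity
   outside I (our convention for permutations of I). *)
Definition removed_from (J : {fset nat}) (tau : nat -> nat)
    (I : {fset nat}) (pi : nat -> nat) : Prop :=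
  (forall x, x \in I -> exists m, [/\ 0 < m, iter m tau x \in I,
      pi x = iter m tau x
    & forall k, 0 < k < m -> iter k tau x \notin I])
  /\ (forall x, x \notin I -> pi x = x).

(* Main.v *)
Require Import Defs.
From mathcomp Require Import all_boot.
From mathcomp Require Import finmap.
From Stdlib Require Import Classical ClassicalEpsilon.
From mathcomp Require Import zify.
Set Implicit Arguments. Unset Strict Implicit.

Lemma iter_in (K : {fset nat}) tau x n :
  {in K, forall y, tau y \in K} -> x \in K -> iter n tau x \in K.
Proof. by move=> Hm Hx; elim: n => [|n IH] //=; apply: Hm. Qed.

Lemma iter_inj (K : {fset nat}) tau a b n : is_perm_on K tau ->
  a \in K -> b \in K -> iter n tau a = iter n tau b -> a = b.
Proof.
case=> Hm Hi _ Ha Hb; elim: n => [|n IH] //= E.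
apply: IH; apply: Hi => //; exact: iter_in.
Qed.

Lemma ret_exists (K : {fset nat}) tau x : is_perm_on K tau -> x \in K ->
  exists2 m, 0 < m & iter m tau x = x.
Proof.
move=> [Hm Hi _] Hx.
pose f := fun y : K => insubd y (tau (val y)).
have fE y : val (f y) = tau (val y) by rewrite /f insubdK //; apply: Hm; apply: fsvalP.
have finj : injective f.
  move=> a b E; apply: val_inj; apply: Hi; try apply: fsvalP.
  by rewrite -!fE E.
have itE n y : val (iter n f y) = iter n tau (val y).
  by elim: n => [|n IH] //=; rewrite fE IH.
pose x0 : K := FSetSub Hx.
exists (order f x0); first exact: order_gt0.
by have := congr1 val (iter_order finj x0); rewrite itE.
Qed.

Lemma pw_exists (K I : {fset nat}) tau x : is_perm_on K tau ->
  {subset I <= K} -> x \in I ->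
  exists m, [/\ 0 < m, iter m tau x \in I
    & forall k, 0 < k < m -> iter k tau x \notin I].
Proof.
move=> Hp HIK Hx.
have [m m0 E] := ret_exists Hp (HIK _ Hx).
have ex : exists n, (0 < n) && (iter n tau x \in I).
  by exists m; rewrite m0 E Hx.
case: (ex_minnP ex) => n /andP[n0 nI] Hmin.
exists n; split => // k /andP[k0 kn]; apply/negP => kI.
have := Hmin k; rewrite k0 kI => /(_ isT); rewrite leqNgt kn //.
Qed.

Lemma rem_refl (K : {fset nat}) tau : {in K, forall y, tau y \in K} ->
  (forall x, x \notin K -> tau x = x) -> removed_from K tau K tau.
Proof.
move=> Hm Ho; split => // x Hx; exists 1; split => //; first exact: Hm.
by case=> [|[|k]].
Qed.

Lemma rem_uniq (K I : {fset nat}) tau p1 p2 :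
  removed_from K tau I p1 -> removed_from K tau I p2 -> p1 =1 p2.
Proof.
move=> [H1 O1] [H2 O2] x.
case: (boolP (x \in I)) => Hx; last by rewrite O1 // O2.
have [m1 [m10 m1I -> M1]] := H1 x Hx.
have [m2 [m20 m2I -> M2]] := H2 x Hx.
case: (ltngtP m1 m2) => [lt|lt|-> //].
- by have := M2 m1; rewrite m10 lt m1I => /(_ isT).
- by have := M1 m2; rewrite m20 lt m2I => /(_ isT).
Qed.

Lemma rem_ext (K I : {fset nat}) tau p1 p2 :
  removed_from K tau I p1 -> p1 =1 p2 -> removed_from K tau I p2.
Proof.
move=> [H1 O1] E; split => x Hx; last by rewrite -E O1.
have [m [a b c d]] := H1 x Hx; exists m; split => //; by rewrite -E.
Qed.

Lemma rem_perm (K I : {fset nat}) tau pi : is_perm_on K tau ->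
  {subset I <= K} -> removed_from K tau I pi -> is_perm_on I pi.
Proof.
move=> Hp HIK [H O]; split => //.
  by move=> x Hx; have [m [_ mI -> _]] := H x Hx.
have key : forall x y mx my, x \in I -> y \in I -> 0 < mx -> mx < my ->
    iter mx tau x = iter my tau y ->
    (forall k, 0 < k < my -> iter k tau y \notin I) -> False.
  move=> x y mx my Hx Hy mx0 lt E M.
  have := M (my - mx); rewrite subn_gt0 lt /=.
  have -> : my - mx < my.
    by rewrite ltn_subrL mx0; apply: leq_trans lt.
  move=> /(_ isT); suff -> : iter (my - mx) tau y = x by rewrite Hx.
  symmetry; apply: (iter_inj (n := mx) Hp); first exact: HIK.
    by apply: iter_in; [case: Hp|exact: HIK].
  by rewrite E -iterD subnKC // ltnW.
move=> x y Hx Hy.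
have [mx [mx0 mxI -> Mx]] := H x Hx.
have [my [my0 myI -> My]] := H y Hy.
move=> E; case: (ltngtP mx my) => [lt|lt|eq].
- by case: (key _ _ _ _ Hx Hy mx0 lt E My).
- by case: (key _ _ _ _ Hy Hx my0 lt (esym E) Mx).
- by subst; apply: (iter_inj Hp (HIK _ Hx) (HIK _ Hy) E).
Qed.

Lemma rem_trans (K J I : {fset nat}) tau pi rho :
  removed_from K tau J pi -> removed_from J pi I rho ->
  {subset I <= J} -> removed_from K tau I rho.
Proof.
move=> [H1 O1] [H2 O2] HIJ; split => // x Hx.
have HxJ := HIJ _ Hx.
have piJ : {in J, forall y, pi y \in J}.
  by move=> y Hy; have [m [_ mJ -> _]] := H1 y Hy.
have D : forall j, exists t, [/\ iter j pi x = iter t tau x, (0 < t) = (0 < j)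
    & forall k, k < t -> iter k tau x \in J ->
      exists2 j', j' < j & (0 < k -> 0 < j') /\ iter k tau x = iter j' pi x].
  elim=> [|j [t [Et Pt Kt]]]; first by exists 0; split.
  have yJ : iter j pi x \in J by apply: iter_in.
  have [m [m0 mJ Em Mm]] := H1 _ yJ.
  exists (m + t); split.
  - by rewrite iterS Em Et -iterD.
  - by rewrite addn_gt0 m0.
  move=> k lt kJ.
  case: (ltngtP k t) => [kt|tk|->].
  + have [j' a b] := Kt k kt kJ; exists j' => //; exact: ltnW.
  + exfalso; have H := Mm (k - t).
    have Hr : 0 < k - t < m by apply/andP; split; lia.
    have := H Hr; rewrite Et -iterD subnK; last exact: ltnW.
    by rewrite kJ.
  + exists j => //; split => //; by rewrite Pt.
have [m [m0 mI -> Mm]] := H2 x Hx.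
have [t [Et Pt Kt]] := D m.
exists t; split => //; first by rewrite Pt.
  by rewrite -Et.
move=> k /andP[k0 kt]; apply/negP => kI.
have [j' j'm [/(_ k0) j'0 Ek]] := Kt k kt (HIJ _ kI).
by have := Mm j'; rewrite j'0 j'm -Ek kI => /(_ isT).
Qed.

Definition NI (I : {fset nat}) : nat := maxn 1 (\max_(i <- I) i).

Lemma NI_ge (I : {fset nat}) x : x \in I -> x <= NI I.
Proof.
move=> Hx; rewrite /NI leq_max; apply/orP; right.
exact: (@leq_bigmax_seq nat (enum_fset I) xpredT id x Hx isT).
Qed.

Lemma NI_le (I : {fset nat}) N : 1 <= N -> (forall x, x \in I -> x <= N) ->
  NI I <= N.
Proof.
move=> N1 H; rewrite /NI geq_max N1 /=.
by apply/bigmax_leqP_seq => i Hi _; apply: H.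
Qed.

Lemma in_intv x N : (x \in intv N) = (1 <= x <= N).
Proof. by rewrite /intv in_fset /= mem_iota add1n ltnS. Qed.

Lemma sub_intv (I : {fset nat}) N : 0 \notin I -> (forall x, x \in I -> x <= N) ->
  {subset I <= intv N}.
Proof.
move=> H0 H x Hx; rewrite in_intv H // andbT lt0n.
by apply/negP => /eqP E; rewrite -E Hx in H0.
Qed.

Local Open Scope fset_scope.

Theorem proposition2p1 (sigma : nat -> nat -> nat)
  (Hperm : forall N, 1 <= N -> is_perm_on (intv N) (sigma N))
  (Hrem : forall N, 1 <= N ->
     removed_from (intv N.+1) (sigma N.+1) (intv N) (sigma N)) :
  exists sI : {fset nat} -> nat -> nat,
    (forall (I : {fset nat}) (N : nat), 0 \notin I -> 1 <= N ->
       (forall x, x \in I -> x <= N) ->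
       is_perm_on I (sI I) /\ removed_from (intv N) (sigma N) I (sI I))
    /\
    (forall I J : {fset nat}, 0 \notin J -> I `<=` J ->
       removed_from J (sI J) I (sI I)).
Proof.
have NI1 I : 1 <= NI I by rewrite /NI leq_max leqnn.
have G : forall (I : {fset nat}) x, exists y,
    (0 \notin I -> x \in I -> exists m, [/\ 0 < m,
       iter m (sigma (NI I)) x \in I, y = iter m (sigma (NI I)) x
     & forall k, 0 < k < m -> iter k (sigma (NI I)) x \notin I])
    /\ (x \notin I -> y = x).
  move=> I x; case: (classic ((0 \notin I) /\ (x \in I))) => [[H0 Hx]|Hn].
  - have [m [a b c]] := pw_exists (Hperm _ (NI1 I))
        (sub_intv H0 (@NI_ge I)) Hx.
    exists (iter m (sigma (NI I)) x); split => //; last by rewrite Hx.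
    by move=> _ _; exists m.
  - exists x; split => // H0 Hx; by case: Hn.
pose sI I x := proj1_sig (constructive_indefinite_description _ (G I x)).
have S I : 0 \notin I -> removed_from (intv (NI I)) (sigma (NI I)) I (sI I).
  move=> H0; split => x;
    case: (proj2_sig (constructive_indefinite_description _ (G I x))) => A B.
    exact: A.
  exact: B.
have chain : forall d M, 1 <= M ->
    removed_from (intv (M + d)%N) (sigma (M + d)%N) (intv M) (sigma M).
  move=> d M M1; elim: d => [|d IH].
    rewrite addn0; case: (Hperm M M1) => a _ c; exact: rem_refl.
  rewrite addnS; apply: rem_trans (Hrem _ _) IH _.
    by apply: leq_trans M1 (leq_addr _ _).
  by move=> x; rewrite !in_intv => /andP[-> /leq_trans]; apply; apply: leq_addr.
have C1 : forall (I : {fset nat}) (N : nat), 0 \notin I -> 1 <= N ->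
       (forall x, x \in I -> x <= N) ->
       is_perm_on I (sI I) /\ removed_from (intv N) (sigma N) I (sI I).
  move=> I N H0 N1 HN.
  have sub := sub_intv H0 (@NI_ge I).
  split; first exact: rem_perm (Hperm _ (NI1 I)) sub (S I H0).
  have le := NI_le N1 HN.
  have := chain (N - NI I) (NI I) (NI1 I); rewrite subnKC // => Hc.
  exact: rem_trans Hc (S I H0) sub.
exists sI; split => // I J H0 /fsubsetP HIJ.
have H0I : 0 \notin I by apply/negP => /HIJ; apply/negP.
have HJ x : x \in J -> x <= NI J by apply: NI_ge.
have [pJ rJ] := C1 J (NI J) H0 (NI1 J) HJ.
have [_ rI] := C1 I (NI J) H0I (NI1 J) (fun x Hx => HJ x (HIJ x Hx)).
have subJ : {subset J <= J} by [].
have [rho Hrho] : exists rho, removed_from J (sI J) I rho.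
  have G2 x : exists y, (x \in I -> exists m, [/\ 0 < m, iter m (sI J) x \in I,
       y = iter m (sI J) x & forall k, 0 < k < m -> iter k (sI J) x \notin I])
      /\ (x \notin I -> y = x).
    case: (boolP (x \in I)) => Hx.
      have [m [a b c]] := pw_exists pJ HIJ Hx.
      by exists (iter m (sI J) x); split => // _; exists m.
    by exists x.
  exists (fun x => proj1_sig (constructive_indefinite_description _ (G2 x))).
  split => x; case: (proj2_sig (constructive_indefinite_description _ (G2 x))) => A B.
    exact: A.
  exact: B.
have Hr2 := rem_trans rJ Hrho HIJ.
exact: rem_ext Hrho (rem_uniq Hr2 rI).
Qed.
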